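(* Let the setting and notation be as in the context. Assume the velocity field $\boldsymbol{v}(\boldsymbol{x},t)=\mathbb{E}[\alpha_t'\boldsymbol{x}_0+\sigma_t'\boldsymbol{z}\mid \boldsymbol{x}_t=\boldsymbol{x}]$ is $L$-Lipschitz in its first argument: $\|\boldsymbol{v}(\boldsymbol{x}_1,t)-\boldsymbol{v}(\boldsymbol{x}_2,t)\|_2\le L\|\boldsymbol{x}_1-\boldsymbol{x}_2\|_2$ for all $\boldsymbol{x}_1,\boldsymbol{x}_2\in\mathbb{R}^n$, $t\in[0,1]$. Consider the SDEI loss $$\mathcal{L}_{\mathrm{SDEI}}(\theta)=\mathbb{E}_{\boldsymbol{x}_0,\boldsymbol{z},t,s,\,r\sim\mathcal{U}(t,s)}\big\|\boldsymbol{f}_\theta(\boldsymbol{x}_t,t,s)-\boldsymbol{v}\big(\boldsymbol{x}_t+(r-t)\boldsymbol{f}_{\theta^-}(\boldsymbol{x}_t,t,r),\,r\big)\big\|_2^2 .$$ Then for each fixed $t$ there is $h>0$ such that the following holds: if $\boldsymbol{f}_\theta$ attains the minimum of $\mathcal{L}_{\mathrm{SDEI}}$ (in the stop-gradient sense: with $\theta^-=\theta$ held fixed in the target, $\boldsymbol{f}_\theta$ minimizes the loss over all functions of $(\boldsymbol{x}_t,t,s)$), then $\boldsymbol{f}_\theta(\boldsymbol{x}_t,t,s)=\boldsymbol{f}(\boldsymbol{x}_t,t,s)$ for all $s$ with $|s-t|\le h$, where $\boldsymbol{f}$ is the secant function.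
   Context: Let $p_d$ be a data distribution on $\mathbb{R}^n$, $\boldsymbol{x}_0\sim p_d$, $\boldsymbol{z}\sim\mathcal{N}(\boldsymbol{0},\boldsymbol{I})$ independent, and let $\alpha_t,\sigma_t$ be differentiable functions on $[0,1]$ with derivatives $\alpha_t',\sigma_t'$. Set $\boldsymbol{x}_t=\alpha_t\boldsymbol{x}_0+\sigma_t\boldsymbol{z}$. The velocity field is $\boldsymbol{v}(\boldsymbol{x}_t,t)=\mathbb{E}[\alpha_t'\boldsymbol{x}_0+\sigma_t'\boldsymbol{z}\mid\boldsymbol{x}_t]$, and the probability-flow ODE is $\frac{d\boldsymbol{x}_t}{dt}=\boldsymbol{v}(\boldsymbol{x}_t,t)$; for a point $\boldsymbol{x}_t$ at time $t$, $\boldsymbol{x}_r$ denotes the solution of this ODE at time $r$ passing through $\boldsymbol{x}_t$ at time $t$. The secant function is $\boldsymbol{f}(\boldsymbol{x}_t,t,s)=\boldsymbol{v}(\boldsymbol{x}_t,t)$ if $s=t$ and $\boldsymbol{f}(\boldsymbol{x}_t,t,s)=\frac{1}{s-t}\int_t^s\boldsymbol{v}(\boldsymbol{x}_r,r)\,dr$ if $s\neq t$. $\boldsymbol{f}_\theta(\boldsymbol{x},t,s)$ is a parametrized function (neural network) $\mathbb{R}^n\times[0,1]\times[0,1]\to\mathbb{R}^n$; $\theta^-$ denotes a stop-gradient copy of $\theta$ (same value, not differentiated). $r\sim\mathcal{U}(t,s)$ means $r$ uniform on $[\min\{t,s\},\max\{t,s\}]$, independent of $\boldsymbol{x}_0,\boldsymbol{z}$;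 $t,s$ are sampled independently of $\boldsymbol{x}_0,\boldsymbol{z}$. *)

(* Defs.v *)
From HB Require Import structures.
From mathcomp Require Import all_boot all_order all_algebra.
From mathcomp Require Import all_classical all_reals all_analysis.
Set Implicit Arguments. Unset Strict Implicit. Unset Printing Implicit Defensive.
Import Order.TTheory GRing.Theory Num.Theory.
Import numFieldNormedType.Exports.
Local Open Scope classical_set_scope.
Local Open Scope ring_scope.

Section Defs.
Variables (R : realType) (n : nat).

Definition sqnorm2 (x : 'rV[R]_n) : R := \sum_(i < n) (x ord0 i) ^+ 2.
Definition norm2 (x : 'rV[R]_n) : R := Num.sqrt (sqnorm2 x).

Definition vint (g : R -> 'rV[R]_n) (a b : R) : 'rV[R]_n :=
  \row_(i < n) (if a <= b
                then Rintegral (@lebesgue_measure R) `[a, b] (fun r => g r ord0 i)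
                else - Rintegral (@lebesgue_measure R) `[b, a] (fun r => g r ord0 i)).

(** secant function f(x_t,t,s); [flow x t r] is x_r, the solution of the
    PF-ODE at time r passing through x at time t *)
Definition secant (v : 'rV[R]_n -> R -> 'rV[R]_n)
  (flow : 'rV[R]_n -> R -> R -> 'rV[R]_n) (x : 'rV[R]_n) (t s : R) : 'rV[R]_n :=
  if s == t then v x t
  else (s - t)^-1 *: vint (fun r => v (flow x t r) r) t s.

(** E_{r ~ U(t,s)} [g r] (extended-real valued, g >= 0 intended);
    U(t,t) is the point mass at t *)
Definition unif_mean (t s : R) (g : R -> R) : \bar R :=
  if s == t then (g t)%:E
  else (((`|s - t|)^-1)%:E *
       \int[@lebesgue_measure R]_(r in `[Num.min t s, Num.max t s]) (g r)%:E)%E.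

(** conditional SDEI risk at (x_t,t,s) of the prediction c, with the target
    built from the stop-gradient copy f_{theta^-} *)
Definition sdei_risk (v : 'rV[R]_n -> R -> 'rV[R]_n)
  (fminus : 'rV[R]_n -> R -> R -> 'rV[R]_n) (x : 'rV[R]_n) (t s : R)
  (c : 'rV[R]_n) : \bar R :=
  unif_mean t s (fun r => sqnorm2 (c - v (x + (r - t) *: fminus x t r) r)).

End Defs.

(* Main.v *)
Require Import Defs.
From HB Require Import structures.
From mathcomp Require Import all_boot all_order all_algebra.
From mathcomp Require Import all_classical all_reals all_analysis.
From mathcomp Require Import ring lra.
Import Order.TTheory GRing.Theory Num.Theory.
Import numFieldNormedType.Exports.
Local Open Scope classical_set_scope.
Local Open Scope ring_scope.


Lemma sqnorm2_ge0 (R : realType) n (z : 'rV[R]_n) : 0 <= sqnorm2 z.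
Proof. by apply: sumr_ge0 => i _; exact: sqr_ge0. Qed.

Lemma sqnorm2_le0 (R : realType) n (z : 'rV[R]_n) : sqnorm2 z <= 0 -> z = 0.
Proof.
move=> h; have h0 : sqnorm2 z = 0 by apply/eqP; rewrite eq_le h sqnorm2_ge0.
move/eqP: h0; rewrite /sqnorm2 psumr_eq0; last by move=> i _; exact: sqr_ge0.
move/allP => H; apply/rowP => i; rewrite mxE.
by have /= := H i (mem_index_enum _); rewrite sqrf_eq0 => /eqP.
Qed.

Lemma coord_le_sqnorm2 (R : realType) n (z : 'rV[R]_n) i : (z ord0 i) ^+ 2 <= sqnorm2 z.
Proof.
rewrite /sqnorm2 (bigD1 i) //= lerDl; apply: sumr_ge0 => j _; exact: sqr_ge0.
Qed.

Lemma sqnorm2_norm2 (R : realType) n (z : 'rV[R]_n) : norm2 z ^+ 2 = sqnorm2 z.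
Proof. by rewrite /norm2 sqr_sqrtr // sqnorm2_ge0. Qed.

Lemma norm2_ge0 (R : realType) n (z : 'rV[R]_n) : 0 <= norm2 z.
Proof. exact: sqrtr_ge0. Qed.

Lemma coord_le_norm2 (R : realType) n (z : 'rV[R]_n) i : `|z ord0 i| <= norm2 z.
Proof.
rewrite -(ler_pXn2r (n:=2)) ?nnegrE ?norm2_ge0 //.
by rewrite sqnorm2_norm2 real_normK ?num_real // coord_le_sqnorm2.
Qed.

Lemma coord_le_mxnorm (R : realType) n (z : 'rV[R]_n) i : `|z ord0 i| <= `|z|.
Proof.
rewrite [X in _ <= X]/Num.Def.normr /= mx_normrE.
by apply: le_trans (le_bigmax _ _ (ord0, i)).
Qed.

Lemma mxnorm_le_norm2 (R : realType) n (z : 'rV[R]_n) : `|z| <= norm2 z.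
Proof.
rewrite [X in X <= _]/Num.Def.normr /= mx_normrE.
apply: bigmax_le; first exact: norm2_ge0.
by move=> [i j] _ /=; rewrite (ord1 i); exact: coord_le_norm2.
Qed.

Lemma norm2_le_mxnorm (R : realType) n (z : 'rV[R]_n) : norm2 z <= n.+1%:R * `|z|.
Proof.
rewrite -(ler_pXn2r (n:=2)) ?nnegrE ?norm2_ge0 ?mulr_ge0 //.
rewrite sqnorm2_norm2 /sqnorm2.
apply: (@le_trans _ _ (\sum_(i < n) `|z|^+2)).
  apply: ler_sum => i _; rewrite -real_normK ?num_real //.
  by rewrite ler_pXn2r ?nnegrE // coord_le_mxnorm.
rewrite sumr_const card_ord -[X in X <= _]mulr_natl exprMn.
apply: ler_wpM2r; first exact: sqr_ge0.
rewrite -natrX ler_nat (leq_trans (leqnSn n)) // expnS expn1 leq_pmulr //.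
Qed.


Lemma within_coord (R : realType) n (A : set R) (p : R -> 'rV[R]_n) i :
  {within A, continuous p} -> {within A, continuous (fun r => p r ord0 i)}.
Proof.
move=> cp x; apply: (@continuous_comp (subspace A) _ _ p (fun M : 'rV[R]_n => M ord0 i)).
  exact: cp.
exact: coord_continuous.
Qed.

Lemma sqnorm2_continuous (R : realType) n : continuous (@sqnorm2 R n).
Proof.
move=> z; rewrite /sqnorm2.
have key i : (fun x : 'rV[R]_n => x ord0 i ^+ 2) @ z --> z ord0 i ^+ 2.
  have h := cvgM (@coord_continuous R 1 n ord0 i z) (@coord_continuous R 1 n ord0 i z).
  rewrite expr2; exact: h.
apply: cvg_big.
- exact: add_continuous.
- exact: nbhs_filter.
- move=> i _; exact: key.
Qed.

Lemma within_sqnorm2 (R : realType) n (A : set R) (p : R -> 'rV[R]_n) :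
  {within A, continuous p} -> {within A, continuous (fun r => sqnorm2 (p r))}.
Proof.
move=> cp x; apply: (@continuous_comp (subspace A) _ _ p (@sqnorm2 R n)); first exact: cp.
exact: sqnorm2_continuous.
Qed.

Lemma vcomp (R : realType) n (v : 'rV[R]_n -> R -> 'rV[R]_n) (L : R)
  (Lip : forall (x1 x2 : 'rV[R]_n) (t : R), t \in `[0, 1] ->
     norm2 (v x1 t - v x2 t) <= L * norm2 (x1 - x2))
  (cv : forall x : 'rV[R]_n, {within `[0, 1], continuous (v x)})
  (p : R -> 'rV[R]_n) :
  {within `[0, 1], continuous p} -> {within `[0, 1], continuous (fun r => v (p r) r)}.
Proof.
move=> cp; apply/subspace_continuousP => r0 r0in.
have /subspace_continuousP /(_ r0 r0in) hp := cp.
have /subspace_continuousP /(_ r0 r0in) hv := cv (p r0).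
apply/cvgrPdist_lt => e e0.
set k := (`|L| + 1) * n.+1%:R.
have k0 : 0 < k by rewrite mulr_gt0 // ltr_wpDl.
have e20 : 0 < e / 2 by rewrite divr_gt0.
move/cvgrPdist_lt : hv => /(_ _ e20) hv.
move/cvgrPdist_lt : hp => /(_ (e / 2 / k)) hp.
have := hp (divr_gt0 e20 k0) => {}hp.
near=> y.
have yA : y \in `[0, 1]%classic by rewrite inE; near: y; exact: near_withinT.
have h1 : `|v (p r0) r0 - v (p r0) y| < e / 2 by near: y.
have h2 : `|p r0 - p y| < e / 2 / k by near: y.
rewrite -(subrKA (v (p r0) y)) (le_lt_trans (ler_normD _ _)) //.
rewrite (splitr e) ltr_leD //.
change (`|v (p r0) y - v (p y) y| <= e / 2).
apply: le_trans; first exact: mxnorm_le_norm2.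
have yA' : y \in `[0, 1] by move: yA; rewrite inE.
apply: (le_trans (Lip _ _ _ yA')).
apply: le_trans; first exact: (ler_wpM2r (norm2_ge0 _ _ (p r0 - p y)) (ler_norm L)).
apply: le_trans; first exact: (ler_wpM2l (normr_ge0 L) (norm2_le_mxnorm _ _ (p r0 - p y))).
rewrite mulrA.
apply: (@le_trans _ _ (k * `|p r0 - p y|)).
  apply: ler_wpM2r; first exact: normr_ge0.
  by rewrite /k ler_wpM2r // lerDl.
rewrite -ler_pdivlMl // mulrC; exact: ltW.
Unshelve. all: by end_near.
Qed.


Notation mu := (@lebesgue_measure _).
Notation cont a b q := {within `[a, b], continuous q}.
Notation RI a b q := (Rintegral (@lebesgue_measure _) `[a, b] q).

Lemma int_cont (R : realType) (a b : R) (q : R -> R) :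
  cont a b q -> (@lebesgue_measure R).-integrable `[a, b] (EFin \o q).
Proof. by move=> cq; apply: continuous_compact_integrable => //; exact: segment_compact. Qed.

Lemma int_EFin (R : realType) (a b : R) (q : R -> R) : cont a b q ->
  (\int[@lebesgue_measure R]_(x in `[a, b]) (q x)%:E = (RI a b q)%:E)%E.
Proof. by move=> cq; rewrite /Rintegral fineK //; apply: integrable_fin_num => //; exact: int_cont. Qed.

Lemma contD (R : realType) (a b : R) (f g : R -> R) : cont a b f -> cont a b g ->
  cont a b (fun r => f r + g r).
Proof. by move=> cf cg x; apply: continuousD; [exact: cf|exact: cg]. Qed.

Lemma contB (R : realType) (a b : R) (f g : R -> R) : cont a b f -> cont a b g ->
  cont a b (fun r => f r - g r).
Proof. by move=> cf cg x; apply: continuousB; [exact: cf|exact: cg]. Qed.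

Lemma contM (R : realType) (a b : R) (f g : R -> R) : cont a b f -> cont a b g ->
  cont a b (fun r => f r * g r).
Proof. by move=> cf cg x; apply: continuousM; [exact: cf|exact: cg]. Qed.

Lemma contC (R : realType) (a b : R) (c : R) : cont a b (fun _ => c).
Proof. by move=> x; exact: cvg_cst. Qed.

Lemma cont_sum (R : realType) (a b : R) (I : Type) (s : seq I) (q : I -> R -> R) :
  (forall i, cont a b (q i)) -> cont a b (fun r => \sum_(i <- s) q i r).
Proof.
move=> cq; elim: s => [|i s IH].
  have -> : (fun r => \sum_(i <- [::]) q i r) = (fun _ => 0).
    by apply: funext => r; rewrite big_nil.
  exact: contC.
have -> : (fun r => \sum_(j <- i :: s) q j r) = (fun r => q i r + \sum_(j <- s) q j r).
  by apply: funext => r; rewrite big_cons.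
exact: contD.
Qed.

Lemma measure_ab (R : realType) (a b : R) : a <= b ->
  fine ((@lebesgue_measure R) `[a, b]) = b - a.
Proof.
move=> ab; rewrite lebesgue_measure_itv /=; case: ifPn => //; rewrite lte_fin => ab'.
by apply/eqP; rewrite eq_sym subr_eq0 eq_le ab /= leNgt ab'.
Qed.

Lemma RI_sum (R : realType) (a b : R) (I : Type) (s : seq I) (q : I -> R -> R) :
  (forall i, cont a b (q i)) ->
  RI a b (fun r => \sum_(i <- s) q i r) = \sum_(i <- s) RI a b (q i).
Proof.
move=> cq; elim: s => [|i s IH].
  under eq_Rintegral do rewrite big_nil.
  by rewrite big_nil Rintegral_cst // mul0r.
under eq_Rintegral do rewrite big_cons.
rewrite big_cons RintegralD //; first by rewrite IH.
- exact: int_cont.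
- exact/int_cont/cont_sum.
Qed.

Lemma RI_cst (R : realType) (a b c : R) : a <= b -> RI a b (fun _ => c) = c * (b - a).
Proof. by move=> ab; rewrite Rintegral_cst // measure_ab. Qed.

Lemma CS (R : realType) (a b : R) (d : R -> R) : a < b -> cont a b d ->
  (RI a b d) ^+ 2 <= (b - a) * RI a b (fun r => d r ^+ 2).
Proof.
move=> ab cd.
set I := RI a b d; set Q := RI a b _.
have l0 : 0 < b - a by rewrite subr_gt0.
set m := I / (b - a).
have cd2 : cont a b (fun r => d r ^+ 2).
  have -> : (fun r => d r ^+ 2) = (fun r => d r * d r) by apply: funext => r; rewrite expr2.
  exact: contM.
have H : RI a b (fun r => (2 * m) * d r) <= RI a b (fun r => d r ^+ 2 + m ^+ 2).
  apply: le_Rintegral => //.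
  - by apply: int_cont; apply: contM => //; exact: contC.
  - by apply: int_cont; apply: contD => //; exact: contC.
  - move=> r _; have := sqr_ge0 (d r - m); rewrite sqrrB; lra.
rewrite RintegralZl // in H; last exact: int_cont.
rewrite RintegralD // in H; [|exact: int_cont|exact/int_cont/contC].
rewrite RI_cst -/I -/Q in H; last exact: ltW.
have e : m ^+ 2 * (b - a) = m * I by rewrite /m; field; rewrite gt_eqF.
rewrite e in H.
  have e2 : I ^+ 2 = (b - a) * (m * I) by rewrite /m; field; rewrite gt_eqF.
rewrite e2; apply: ler_wpM2l; [exact: ltW | lra].
Qed.


Lemma RI_sq (R : realType) (a b c : R) (g : R -> R) : a <= b -> cont a b g ->
  RI a b (fun r => (c - g r) ^+ 2) =
  c ^+ 2 * (b - a) - 2 * c * RI a b g + RI a b (fun r => g r ^+ 2).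
Proof.
move=> ab cg.
have cg2 : cont a b (fun r => g r ^+ 2).
  have -> : (fun r => g r ^+ 2) = (fun r => g r * g r) by apply: funext => r; rewrite expr2.
  exact: contM.
have -> : (fun r => (c - g r) ^+ 2) = (fun r => (c ^+ 2 - (2 * c) * g r) + g r ^+ 2).
  by apply: funext => r; ring.
rewrite RintegralD //; last 2 first.
- by apply: int_cont; apply: contB; [exact: contC| apply: contM => //; exact: contC].
- exact: int_cont.
rewrite RintegralB //; last 2 first.
- exact/int_cont/contC.
- by apply: int_cont; apply: contM => //; exact: contC.
by rewrite RI_cst // RintegralZl //; exact: int_cont.
Qed.

Definition meanv (R : realType) n (a b : R) (G : R -> 'rV[R]_n) : 'rV[R]_n :=
  \row_i (RI a b (fun r => G r ord0 i) / (b - a)).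
Arguments meanv {R n}.

Lemma risk_formula (R : realType) n (a b : R) (G : R -> 'rV[R]_n) (c : 'rV[R]_n) :
  a < b -> (forall i, cont a b (fun r => G r ord0 i)) ->
  (((b - a)^-1)%:E * \int[@lebesgue_measure R]_(r in `[a, b]) (sqnorm2 (c - G r))%:E)%E =
  (sqnorm2 (c - meanv a b G) +
   \sum_(i < n) (RI a b (fun r => G r ord0 i ^+ 2) / (b - a) -
                 (RI a b (fun r => G r ord0 i) / (b - a)) ^+ 2))%:E.
Proof.
move=> ab cG.
have l0 : b - a != 0 by rewrite subr_eq0 gt_eqF.
have E : (fun r => sqnorm2 (c - G r)) =
         (fun r => \sum_(i <- index_enum 'I_n) (c ord0 i - G r ord0 i) ^+ 2).
  by apply: funext => r; rewrite /sqnorm2; apply: eq_bigr => i _; rewrite !mxE.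
have ci : forall i, cont a b (fun r => (c ord0 i - G r ord0 i) ^+ 2).
  move=> i; have -> : (fun r => (c ord0 i - G r ord0 i) ^+ 2) =
     (fun r => (c ord0 i - G r ord0 i) * (c ord0 i - G r ord0 i)).
    by apply: funext => r; rewrite expr2.
  by apply: contM; apply: contB => //; exact: contC.
rewrite int_EFin; last by rewrite E; apply: (@cont_sum _ _ _ _ _ (fun i r => (c ord0 i - G r ord0 i) ^+ 2)).
rewrite E.
rewrite -EFinM; congr EFin.
rewrite (@RI_sum _ _ _ _ _ (fun i r => (c ord0 i - G r ord0 i) ^+ 2)) //.
rewrite mulr_sumr /sqnorm2 -big_split /=; apply: eq_bigr => i _.
rewrite RI_sq ?ltW // !mxE; field; exact: l0.
Qed.

Lemma argmin_mean (R : realType) n (a b : R) (G : R -> 'rV[R]_n) (c0 : 'rV[R]_n) :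
  a < b -> (forall i, cont a b (fun r => G r ord0 i)) ->
  (forall c, (((b - a)^-1)%:E * \int[@lebesgue_measure R]_(r in `[a, b]) (sqnorm2 (c0 - G r))%:E <=
              ((b - a)^-1)%:E * \int[@lebesgue_measure R]_(r in `[a, b]) (sqnorm2 (c - G r))%:E)%E) ->
  c0 = meanv a b G.
Proof.
move=> ab cG /(_ (meanv a b G)); rewrite !risk_formula // lee_fin subrr.
have -> : sqnorm2 (0 : 'rV[R]_n) = 0.
  by rewrite /sqnorm2 big1 // => i _; rewrite mxE expr0n.
rewrite lerD2r => /sqnorm2_le0 /eqP; rewrite subr_eq0 => /eqP.
done.
Qed.


Lemma sub01 (R : realType) (a b : R) : 0 <= a -> b <= 1 -> `[a, b] `<=` `[0, 1].
Proof.
move=> a0 b1 r /=; rewrite !in_itv /= => /andP[ar rb].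
by rewrite (le_trans a0 ar) (le_trans rb b1).
Qed.

Lemma cont_sub (R : realType) (a b : R) (q : R -> R) : 0 <= a -> b <= 1 ->
  cont 0 1 q -> cont a b q.
Proof. by move=> a0 b1; apply: continuous_subspaceW; exact: sub01. Qed.

Lemma ftc_flow (R : realType) n (F w : R -> 'rV[R]_n) (a b : R) i :
  0 <= a -> a < b -> b <= 1 ->
  {within `[0, 1], continuous F} -> {within `[0, 1], continuous w} ->
  (forall r : R, r \in `]0, 1[ -> is_derive r 1 F (w r)) ->
  RI a b (fun r => w r ord0 i) = F b ord0 i - F a ord0 i.
Proof.
move=> a0 ab b1 cF cw dF.
have cwi : cont a b (fun r => w r ord0 i) by apply: cont_sub => //; exact: within_coord.
have cFi : cont a b (fun r => F r ord0 i) by apply: cont_sub => //; exact: within_coord.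
have inab r : r \in `]a, b[ -> r \in `]0, 1[.
  rewrite !in_itv /= => /andP[ar rb].
  by rewrite (le_lt_trans a0 ar) (lt_le_trans rb b1).
have cFi' := cFi.
move/continuous_within_itvP : cFi' => /(_ ab) [_ Fa Fb].
have H1 : derivable_oo_LRcontinuous (fun r => F r ord0 i) a b.
  split => //.
  move=> r /inab /dF H.
  exact: ((derivable_mxP F r 1).1 (@ex_derive _ _ _ _ _ _ _ H) ord0 i).
have H2 : {in `]a, b[, derive1 (fun r => F r ord0 i) =1 (fun r => w r ord0 i)}.
  move=> r /inab /dF H.
  rewrite derive1E.
  have := derive_mx (@ex_derive _ _ _ _ _ _ _ H).
  rewrite (@derive_val _ _ _ _ _ _ _ H) => /(congr1 (fun M : 'rV[R]_n => M ord0 i)).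
  by rewrite mxE => ->.
have := @continuous_FTC2 R (fun r => w r ord0 i) (fun r => F r ord0 i) a b ab cwi H1 H2.
rewrite int_EFin // => /eqP; rewrite -EFinB eqe => /eqP.
done.
Qed.


Lemma sq_int_bound (R : realType) n (a b C : R) (D : R -> 'rV[R]_n) : a < b ->
  (forall i, cont a b (fun r => D r ord0 i)) ->
  (forall r, r \in `[a, b] -> sqnorm2 (D r) <= C) ->
  \sum_(i < n) (RI a b (fun r => D r ord0 i)) ^+ 2 <= (b - a) ^+ 2 * C.
Proof.
move=> ab cD hC.
have ci i : cont a b (fun r => D r ord0 i ^+ 2).
  have -> : (fun r => D r ord0 i ^+ 2) = (fun r => D r ord0 i * D r ord0 i).
    by apply: funext => r; rewrite expr2.
  exact: contM.
apply: (@le_trans _ _ (\sum_(i < n) (b - a) * RI a b (fun r => D r ord0 i ^+ 2))).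
  by apply: ler_sum => i _; exact: CS.
rewrite -mulr_sumr.
rewrite -(@RI_sum _ _ _ _ _ (fun i r => D r ord0 i ^+ 2)) //.
rewrite expr2 -mulrA; apply: ler_wpM2l; first by rewrite subr_ge0 ltW.
rewrite mulrC -RI_cst; last exact: ltW.
apply: le_Rintegral => //.
- by apply: int_cont; apply: (@cont_sum _ _ _ _ _ (fun i r => D r ord0 i ^+ 2)).
- exact/int_cont/contC.
Qed.

Lemma lip_sq (R : realType) n (v : 'rV[R]_n -> R -> 'rV[R]_n) (L : R)
  (Lip : forall (x1 x2 : 'rV[R]_n) (t : R), t \in `[0, 1] ->
     norm2 (v x1 t - v x2 t) <= L * norm2 (x1 - x2)) x1 x2 t :
  t \in `[0, 1] -> sqnorm2 (v x1 t - v x2 t) <= L ^+ 2 * sqnorm2 (x1 - x2).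
Proof.
move=> tin; have h := Lip x1 x2 t tin.
rewrite -!sqnorm2_norm2 -exprMn.
rewrite ler_pXn2r // ?nnegrE ?norm2_ge0 //.
exact: le_trans (norm2_ge0 _ _ _) h.
Qed.


Lemma vint_lt (R : realType) n (g : R -> 'rV[R]_n) (t s : R) : t < s ->
  vint g t s = \row_i RI t s (fun r => g r ord0 i).
Proof. by move=> ts; apply/rowP => i; rewrite !mxE (ltW ts). Qed.

Lemma vint_gt (R : realType) n (g : R -> 'rV[R]_n) (t s : R) : s < t ->
  vint g t s = - \row_i RI s t (fun r => g r ord0 i).
Proof. by move=> st; apply/rowP => i; rewrite !mxE leNgt st. Qed.

Lemma in01 {R : realType} {t : R} : t \in `[0, 1] -> 0 <= t /\ t <= 1.
Proof. by rewrite in_itv /= => /andP. Qed.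

Lemma risk_ne (R : realType) n (v : 'rV[R]_n -> R -> 'rV[R]_n) f x (t s : R) c :
  s != t -> sdei_risk v f x t s c =
  (((`|s - t|)^-1)%:E * \int[@lebesgue_measure R]_(r in `[Num.min t s, Num.max t s])
     (sqnorm2 (c - v (x + (r - t) *: f x t r) r))%:E)%E.
Proof. by move=> st; rewrite /sdei_risk /unif_mean (negbTE st). Qed.

Lemma hvG (R : realType) n (v : 'rV[R]_n -> R -> 'rV[R]_n) (f : 'rV[R]_n -> R -> R -> 'rV[R]_n)
  x (t s : R) :
  t \in `[0, 1] -> s \in `[0, 1] -> s != t ->
  {within `[0, 1], continuous (fun r => v (x + (r - t) *: f x t r) r)} ->
  (forall c, (sdei_risk v f x t s (f x t s) <= sdei_risk v f x t s c)%E) ->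
  vint (fun r => v (x + (r - t) *: f x t r) r) t s = (s - t) *: f x t s.
Proof.
move=> tin sin st cG hm.
have [t0 t1] := in01 tin; have [s0 s1] := in01 sin.
set G := (fun r => v (x + (r - t) *: f x t r) r) in cG *.
have cGi a b i : 0 <= a -> b <= 1 -> cont a b (fun r => G r ord0 i).
  by move=> a0 b1; apply: cont_sub => //; exact: within_coord.
have {}hm : forall c, (sdei_risk v f x t s (f x t s) <= sdei_risk v f x t s c)%E by [].
case: (ltgtP t s) => [ts|ts|ets]; last by rewrite ets eqxx in st.
- have hm' : forall c, (((s - t)^-1)%:E * \int[@lebesgue_measure R]_(r in `[t, s]) (sqnorm2 (f x t s - G r))%:E <=
              ((s - t)^-1)%:E * \int[@lebesgue_measure R]_(r in `[t, s]) (sqnorm2 (c - G r))%:E)%E.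
    have sp : 0 < s - t by rewrite subr_gt0.
    move=> c; have := hm c; rewrite !risk_ne // (min_l (ltW ts)) (max_r (ltW ts)) (gtr0_norm sp).
    done.
  have -> := @argmin_mean _ _ _ _ _ _ ts (fun i => cGi t s i t0 s1) hm'.
  rewrite vint_lt //; apply/rowP => i; rewrite !mxE; field.
  by rewrite subr_eq0 gt_eqF.
- have hm' : forall c, (((t - s)^-1)%:E * \int[@lebesgue_measure R]_(r in `[s, t]) (sqnorm2 (f x t s - G r))%:E <=
              ((t - s)^-1)%:E * \int[@lebesgue_measure R]_(r in `[s, t]) (sqnorm2 (c - G r))%:E)%E.
    have sp : s - t < 0 by rewrite subr_lt0.
    move=> c; have := hm c; rewrite !risk_ne // (min_r (ltW ts)) (max_l (ltW ts)) (ltr0_norm sp) opprB.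
    done.
  have -> := @argmin_mean _ _ _ _ _ _ ts (fun i => cGi s t i s0 t1) hm'.
  rewrite vint_gt //; apply/rowP => i; rewrite !mxE; field.
  by rewrite subr_eq0 gt_eqF.
Qed.

Lemma hvw (R : realType) n (F w : R -> 'rV[R]_n) (t s : R) :
  t \in `[0, 1] -> s \in `[0, 1] -> s != t ->
  {within `[0, 1], continuous F} -> {within `[0, 1], continuous w} ->
  (forall r : R, r \in `]0, 1[ -> is_derive r 1 F (w r)) ->
  vint w t s = F s - F t.
Proof.
move=> tin sin st cF cw dF.
have [t0 t1] := in01 tin; have [s0 s1] := in01 sin.
case: (ltgtP t s) => [ts|ts|ets]; last by rewrite ets eqxx in st.
- by rewrite vint_lt //; apply/rowP => i; rewrite !mxE (ftc_flow _ _ _ _ _ _ i t0 ts s1 cF cw dF).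
- rewrite vint_gt //; apply/rowP => i; rewrite !mxE (ftc_flow _ _ _ _ _ _ i s0 ts t1 cF cw dF).
  by rewrite opprB.
Qed.

Lemma rep (R : realType) n (g w : R -> 'rV[R]_n) (t s : R) :
  t \in `[0, 1] -> s \in `[0, 1] -> s != t ->
  {within `[0, 1], continuous g} -> {within `[0, 1], continuous w} ->
  sqnorm2 (vint g t s - vint w t s) =
  \sum_(i < n) (RI (Num.min t s) (Num.max t s) (fun r => g r ord0 i - w r ord0 i)) ^+ 2.
Proof.
move=> tin sin st cg cw.
have [t0 t1] := in01 tin; have [s0 s1] := in01 sin.
have ci a b (q : R -> 'rV[R]_n) i : 0 <= a -> b <= 1 -> {within `[0, 1], continuous q} ->
    cont a b (fun r => q r ord0 i).
  by move=> a0 b1 cq; apply: cont_sub => //; exact: within_coord.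
rewrite /sqnorm2; apply: eq_bigr => i _.
case: (ltgtP t s) => [ts|ts|ets]; last by rewrite ets eqxx in st.
- rewrite !vint_lt // !mxE RintegralB //.
  + exact: int_cont (ci _ _ _ _ t0 s1 cg).
  + exact: int_cont (ci _ _ _ _ t0 s1 cw).
- rewrite !vint_gt // !mxE RintegralB //.
  + by rewrite -opprD sqrrN.
  + exact: int_cont (ci _ _ _ _ s0 t1 cg).
  + exact: int_cont (ci _ _ _ _ s0 t1 cw).
Qed.

Lemma minmax_lt (R : realType) (t r : R) : r != t -> Num.min t r < Num.max t r.
Proof.
move=> rt; case: (ltgtP t r) => [tr|tr|e]; last by rewrite e eqxx in rt.
- done.
- done.
Qed.

Lemma minmax_len (R : realType) (t r : R) : Num.max t r - Num.min t r = `|r - t|.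
Proof.
case: (leP t r) => tr.
- by rewrite ger0_norm // subr_ge0.
- by rewrite ltr0_norm ?subr_lt0 // opprB.
Qed.

Lemma between (R : realType) (t r u : R) : t \in `[0, 1] -> r \in `[0, 1] ->
  u \in `[Num.min t r, Num.max t r] -> u \in `[0, 1] /\ `|u - t| <= `|r - t|.
Proof.
move=> /in01 [t0 t1] /in01 [r0 r1].
case: (leP t r) => tr.
- rewrite in_itv /= => /andP[tu ur].
  rewrite in_itv /= !ger0_norm ?subr_ge0 //.
  split; [apply/andP; split|]; lra.
- rewrite in_itv /= => /andP[ru ut].
  rewrite in_itv /= !ler0_norm ?subr_le0 //; try exact: ltW.
  split; [apply/andP; split|]; lra.
Qed.


Theorem theorem1 (R : realType) (n : nat)
  (v : 'rV[R]_n -> R -> 'rV[R]_n) (L : R)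
  (flow : 'rV[R]_n -> R -> R -> 'rV[R]_n) :
  (forall (x1 x2 : 'rV[R]_n) (t : R), t \in `[0, 1] ->
     norm2 (v x1 t - v x2 t) <= L * norm2 (x1 - x2)) ->
  (forall x : 'rV[R]_n, {within `[0, 1], continuous (v x)}) ->
  (forall (x : 'rV[R]_n) (t : R), t \in `[0, 1] ->
     [/\ flow x t t = x,
         {within `[0, 1], continuous (flow x t)} &
         forall r : R, r \in `]0, 1[ -> is_derive r 1 (flow x t) (v (flow x t r) r)]) ->
  forall t : R, t \in `[0, 1] ->
  exists2 h : R, 0 < h &
    forall ftheta : 'rV[R]_n -> R -> R -> 'rV[R]_n,
      (forall (x : 'rV[R]_n) (t' : R), continuous (ftheta x t')) ->
      (forall (x : 'rV[R]_n) (t' s : R), t' \in `[0, 1] -> s \in `[0, 1] ->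
         forall c : 'rV[R]_n,
           (sdei_risk v ftheta x t' s (ftheta x t' s) <= sdei_risk v ftheta x t' s c)%E) ->
      forall (x : 'rV[R]_n) (s : R), s \in `[0, 1] -> `|s - t| <= h ->
        ftheta x t s = secant v flow x t s.
Proof.
move=> Lip cv hflow t tin.
have L1 : 0 < `|L| + 1 by rewrite ltr_wpDl.
set h := (2 * (`|L| + 1))^-1.
have h0 : 0 < h by rewrite invr_gt0 mulr_gt0.
have hL : h ^+ 2 * L ^+ 2 <= 4^-1.
  have e : h * `|L| = `|L| / (2 * (`|L| + 1)) by rewrite mulrC.
  have hl : h * `|L| <= 2^-1.
    rewrite e ler_pdivrMr ?mulr_gt0 //.
    have -> : 2^-1 * (2 * (`|L| + 1)) = `|L| + 1 :> R.
      by rewrite mulrA mulVf ?mul1r // pnatr_eq0.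
    by rewrite lerDl.
  have -> : h ^+ 2 * L ^+ 2 = (h * `|L|) ^+ 2 by rewrite exprMn real_normK // num_real.
  have -> : 4^-1 = (2^-1) ^+ 2 :> R by rewrite exprVn -natrX.
  rewrite ler_pXn2r // nnegrE; first by rewrite mulr_ge0 // ltW.
  by rewrite invr_ge0.
exists h => // ftheta cf hmin x s sin hs.
have [t0 t1] := in01 tin.
have [F0 cF dF] := hflow x t tin.
pose F := flow x t.
pose w r := v (F r) r.
have cw : {within `[0, 1], continuous w} := @vcomp R n v L Lip cv _ cF.
pose y r := x + (r - t) *: ftheta x t r.
have cy : {within `[0, 1], continuous y}.
  apply: continuous_subspaceT => r; rewrite /y.
  apply: cvgD; first exact: cvg_cst.
  apply: cvgZ; last exact: cf.
  by apply: cvgB; [exact: cvg_id | exact: cvg_cst].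
pose G r := v (y r) r.
have cG : {within `[0, 1], continuous G} := @vcomp R n v L Lip cv _ cy.
pose E r := y r - F r.
have cE : {within `[0, 1], continuous E}.
  by move=> r; apply: cvgB; [exact: cy | exact: cF].
have Et : E t = 0 by rewrite /E /y /F subrr scale0r addr0 F0 subrr.
have Erep r : r \in `[0, 1] -> r != t -> E r = vint G t r - vint w t r.
  move=> rin rt.
  rewrite (@hvG R n v ftheta x t r tin rin rt cG (hmin x t r tin rin)).
  rewrite (@hvw R n F w t r tin rin rt cF cw dF) /E /y /F F0.
  by rewrite opprB -addrA addrCA.
have sq0 : sqnorm2 (0 : 'rV[R]_n) = 0.
  by rewrite /sqnorm2 big1 // => i _; rewrite mxE expr0n.
pose J := [set r : R | r \in `[0, 1] /\ `|r - t| <= h].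
have Jt : J t by split => //; rewrite subrr normr0 ltW.
have [c cin cmax] := EVT_max ler01 (@within_sqnorm2 R n _ E cE).
pose S := [set sqnorm2 (E r) | r in J].
have hS : has_sup S.
  split; first by exists (sqnorm2 (E t)); exists t.
  by exists (sqnorm2 (E c)) => _ [r [rin _] <-]; exact: cmax.
set M := sup S.
have EM r : J r -> sqnorm2 (E r) <= M.
  by move=> Jr; apply: sup_upper_bound => //; exists r.
have M0 : 0 <= M by have := EM t Jt; rewrite Et sq0.
have step r : J r -> sqnorm2 (E r) <= 4^-1 * M.
  move=> [rin hr]; case: (eqVneq r t) => [->|rt].
    by rewrite Et sq0 mulr_ge0 // invr_ge0.
  rewrite Erep // (@rep R n G w t r tin rin rt cG cw).
  set a := Num.min t r; set b := Num.max t r.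
  have ab : a < b by exact: (@minmax_lt R t r rt).
  rewrite (eq_bigr (fun i => (RI a b (fun u => (G u - w u) ord0 i)) ^+ 2)); last first.
    move=> i _; apply: (congr1 (fun z => z ^+ 2)); apply: eq_Rintegral => u _.
    by rewrite !mxE.
  have aab : a \in `[a, b] by rewrite in_itv /= lexx ltW.
  have bab : b \in `[a, b] by rewrite in_itv /= lexx ltW.
  have [a0 _] := in01 (@between R t r a tin rin aab).1.
  have [_ b1] := in01 (@between R t r b tin rin bab).1.
  apply: le_trans (@sq_int_bound R n a b (L ^+ 2 * M) (fun u => G u - w u) ab _ _) _.
  - move=> i; apply: cont_sub => //; apply: within_coord.
    by move=> u; apply: cvgB; [exact: cG | exact: cw].
  - move=> u uab; have [uin hu] := @between R t r u tin rin uab.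
    apply: le_trans; first exact: (@lip_sq R n v L Lip (y u) (F u) u uin).
    apply: ler_wpM2l; first exact: sqr_ge0.
    apply: EM; split => //; exact: le_trans hu hr.
  rewrite /a /b minmax_len.
  have hr2 : `|r - t| ^+ 2 <= h ^+ 2.
    by rewrite ler_pXn2r // nnegrE ltW.
  apply: (@le_trans _ _ (h ^+ 2 * (L ^+ 2 * M))).
    by apply: ler_wpM2r => //; rewrite mulr_ge0 // sqr_ge0.
  by rewrite mulrA; apply: ler_wpM2r.
have M4 : M <= 4^-1 * M.
  apply: ge_sup; first by exists (sqnorm2 (E t)); exists t.
  by move=> _ [r Jr <-]; exact: step.
have Mle0 : M <= 0 by lra.
have Js : J s by split.
have ES : E s = 0 by apply: sqnorm2_le0; exact: le_trans (EM s Js) Mle0.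
have yF : x + (s - t) *: ftheta x t s = F s.
  by apply/eqP; rewrite -subr_eq0; apply/eqP; exact: ES.
rewrite /secant; case: eqVneq => [est|st].
  rewrite est; have := hmin x t t tin tin (v x t).
  rewrite /sdei_risk /unif_mean eqxx subrr scale0r addr0 subrr sq0 lee_fin.
  by move=> /sqnorm2_le0 /eqP; rewrite subr_eq0 => /eqP.
change (ftheta x t s = (s - t)^-1 *: vint w t s).
rewrite (@hvw R n F w t s tin sin st cF cw dF) -yF /F F0 addrAC subrr add0r.
by rewrite scalerA mulVf ?scale1r // subr_eq0.
Qed.
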